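(* Let $p=p_1\otimes\cdots\otimes p_L\in B_{\lambda_1}\otimes\cdots\otimes B_{\lambda_L}$ be any state, and write $\rho_{k,d}=\rho_{k,d}(p)$ and $\bar\rho_{k,d}=\rho_{k,d}(T_\infty(p))$. Then for all $1\le k\le L$ and $2\le d\le n+1$, $$\bar\rho_{k,d-1}+\rho_{k-1,d}=\max\big(\bar\rho_{k,d}+\rho_{k-1,d-1},\ \bar\rho_{k-1,d-1}+\rho_{k,d}-\lambda_k\big).$$
   Context: Fix $n\ge1$. For $l\ge1$ let $B_l=\{x=(x_1,\dots,x_{n+1})\in\mathbb Z_{\ge0}^{n+1}: \sum_i x_i=l\}$ and $u_l=(l,0,\dots,0)\in B_l$. Indices of $x$ are read modulo $n+1$. For $x\in B_l,y\in B_m$ and $i\in\mathbb Z$ put $Q_i(x\otimes y)=\min_{1\le k\le n+1}\big(\sum_{j=1}^{k-1}x_{i+j}+\sum_{j=k+1}^{n+1}y_{i+j}\big)$ (so $Q_{n+1}=Q_0$) and $H(x\otimes y)=\min(l,m)-Q_0(x\otimes y)$. The combinatorial $R$ is the map $B_l\otimes B_m\to B_m\otimes B_l$, $x\otimes y\mapsto\tilde y\otimes\tilde x$, $\tilde x_i=x_i+Q_i-Q_{i-1}$, $\tilde y_i=y_i+Q_{i-1}-Q_i$ ($Q_j=Q_j(x\otimes y)$); write $x\otimes y\simeq\tilde y\otimes\tilde x$, and extend $\simeq$ to tensor products by applying $R$ to adjacent factors. Box-ball system: a state is $p=p_1\otimes\cdots\otimes p_L\in B_{\lambda_1}\otimes\cdots\otimes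 B_{\lambda_L}$ ($\lambda_j\ge1$). For $l\ge1$ let $v_0=u_l$ and recursively $v_{j-1}\otimes p_j\simeq p'_j\otimes v_j$ ($1\le j\le L$); then $T_l(p)=p'_1\otimes\cdots\otimes p'_L$. For all sufficiently large $l$, $T_l(p)$ is independent of $l$; this is $T_\infty(p)$. Writing $T_\infty^t(p)=p^t_1\otimes\cdots\otimes p^t_L$, $p^t_j=(x^t_{j,1},\dots,x^t_{j,n+1})$, define for $0\le k\le L$, $1\le d\le n+1$: $\rho_{k,d}(p)=\sum_{j=1}^k(x^0_{j,2}+\cdots+x^0_{j,d})+\sum_{t\ge1}\sum_{j=1}^k(x^t_{j,2}+\cdots+x^t_{j,n+1})$ (a finite sum), and $\rho_{k,0}(p)=\rho_{k,n+1}(p)-(\lambda_1+\cdots+\lambda_k)$. *)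

(* Defs.v *)
From Stdlib Require Import ClassicalEpsilon.
From mathcomp Require Import all_boot all_order all_algebra.
Set Implicit Arguments. Unset Strict Implicit. Unset Printing Implicit Defensive.
Import Order.TTheory GRing.Theory Num.Theory.

(* An element x = (x_1,...,x_{n+1}) of B_l is a list of n+1 naturals
   summing to l.  A state p_1 (x) ... (x) p_L is the list [:: p_1; ...; p_L]. *)
Definition elt := seq nat.
Definition state := seq elt.

Definition inB (n l : nat) (x : elt) : bool := (size x == n.+1) && (sumn x == l).

(* x_i, 1-based index read modulo n+1 (so x_0 = x_{n+1}). *)
Definition ent (n : nat) (x : elt) (i : nat) : nat := nth 0 x ((i + n) %% n.+1).

Definition uvac (n l : nat) : elt := l :: nseq n 0.

Definition Qterm (n : nat) (x y : elt) (i k : nat) : nat :=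
  (\sum_(1 <= j < k) ent n x (i + j) + \sum_(k.+1 <= j < n.+2) ent n y (i + j))%N.
Definition Q (n : nat) (x y : elt) (i : nat) : nat :=
  \big[minn/Qterm n x y i 1]_(1 <= k < n.+2) Qterm n x y i k.

(* combinatorial R : x (x) y |-> ytilde (x) xtilde, returned as the pair
   (ytilde, xtilde).  Subtraction is truncated; by the theory of R the true
   (integer) values are nonnegative, so this is exact. *)
Definition Rmap (n : nat) (x y : elt) : elt * elt :=
  ([seq (ent n y i + Q n x y i.-1 - Q n x y i)%N | i <- iota 1 n.+1],
   [seq (ent n x i + Q n x y i - Q n x y i.-1)%N | i <- iota 1 n.+1]).

(* carrier sweep: v_{j-1} (x) p_j ~ p'_j (x) v_j *)
Fixpoint sweep (n : nat) (v : elt) (p : state) : state :=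
  match p with
  | [::] => [::]
  | x :: p' => let r := Rmap n v x in r.1 :: sweep n r.2 p'
  end.

Definition Tl (n l : nat) (p : state) : state := sweep n (uvac n l) p.

Definition Tinf (n : nat) (p : state) : state :=
  epsilon (inhabits p) (fun q => exists N, forall l, (N <= l)%N -> Tl n l p = q).

Definition fsum (f : nat -> nat) : nat :=
  epsilon (inhabits 0%N)
    (fun s => exists N, forall M, (N <= M)%N -> (\sum_(1 <= t < M) f t)%N = s).

Definition balls (n d : nat) (x : elt) : nat := (\sum_(2 <= i < d.+1) ent n x i)%N.

Definition lam (p : state) (j : nat) : nat := sumn (nth [::] p j.-1).

Definition rho_pos (n : nat) (p : state) (k d : nat) : nat :=
  (\sum_(1 <= j < k.+1) balls n d (nth [::] p j.-1)
   + fsum (fun t => \sum_(1 <= j < k.+1) balls n n.+1 (nth [::] (iter t (Tinf n) p) j.-1)))%N.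

Definition rho (n : nat) (p : state) (k d : nat) : int :=
  if d == 0%N then (Posz (rho_pos n p k n.+1) - Posz (\sum_(1 <= j < k.+1) lam p j)%N)%R
  else Posz (rho_pos n p k d).

Definition is_state (n : nat) (p : state) : bool :=
  all (fun x => (size x == n.+1) && (0 < sumn x)%N) p.

(* Main.v *)
Require Import Defs.
From Stdlib Require Import ClassicalEpsilon.
From mathcomp Require Import all_boot all_order all_algebra.
From mathcomp Require Import zify.
Import Order.TTheory GRing.Theory Num.Theory.
Set Implicit Arguments. Unset Strict Implicit. Unset Printing Implicit Defensive.

Local Open Scope nat_scope.
Local Arguments Rmap : simpl never.

Lemma bigmin_le c (F : nat -> nat) a b k : a <= k < b ->
  \big[minn/c]_(a <= i < b) F i <= F k.
Proof.
move=> /andP[hak hkb]; have -> : k = a + (k - a) by rewrite subnKC.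
have : a + (k - a) < b by rewrite subnKC.
move: (k - a) => d0; clear hak hkb; elim: d0 a => [|d IH] a h.
  by rewrite big_ltn ?addn0 ?geq_minl // -(addn0 a).
rewrite big_ltn; last by apply: leq_ltn_trans h; rewrite leq_addr.
apply: leq_trans (geq_minr _ _) _; rewrite addnS -addSn; apply: IH.
by rewrite addSn -addnS.
Qed.

Lemma bigmin_ex (F : nat -> nat) a b : a < b ->
  exists k, a <= k < b /\ \big[minn/F a]_(a <= i < b) F i = F k.
Proof.
move=> hab.
suff: forall l a', a <= a' -> b = a' + l ->
  \big[minn/F a]_(a' <= i < b) F i = F a \/
  exists k, a' <= k < b /\ \big[minn/F a]_(a' <= i < b) F i = F k.
  move=> /(_ (b - a) a (leqnn a)); rewrite subnKC ?(ltnW hab) // => /(_ erefl).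
  case=> [->|//]; by exists a; rewrite leqnn hab.
elim=> [|l IH] a' ha' hb.
  by left; rewrite big_geq // hb addn0.
rewrite big_ltn; last by rewrite hb addnS ltnS leq_addr.
have hb' : b = a'.+1 + l by rewrite hb addnS.
have [|[k [hk ->]]] := IH a'.+1 (leqW ha') hb'.
  move=> ->; case: (leqP (F a') (F a)) => h.
    by right; exists a'; rewrite leqnn hb addnS ltnS leq_addr.
  by left.
case: (leqP (F a') (F k)) => h.
  by right; exists a'; rewrite leqnn hb addnS ltnS leq_addr.
right; exists k; split=> //.
by case/andP: hk => h1 h2; rewrite h2 andbT ltnW.
Qed.

Lemma Q_le n x y i k : 1 <= k <= n.+1 -> Q n x y i <= Qterm n x y i k.
Proof. by move=> h; apply: bigmin_le. Qed.

Lemma Q_ex n x y i : exists k, 1 <= k <= n.+1 /\ Q n x y i = Qterm n x y i k.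
Proof. by have [k [hk e]] := @bigmin_ex (Qterm n x y i) 1 n.+2 erefl; exists k. Qed.

Lemma ent_per n x i : ent n x (i + n.+1) = ent n x i.
Proof. by rewrite /ent addnAC modnDr. Qed.

Lemma ent_1 n x : ent n x 1 = nth 0 x 0.
Proof. by rewrite /ent add1n modnn. Qed.

Lemma ent_nth n x i : 1 <= i <= n.+1 -> ent n x i = nth 0 x i.-1.
Proof.
case: i => // j /andP[_ h]; rewrite /ent addSn -addnS modnDr modn_small //.
Qed.

Lemma Qterm_shift n x y i k : 1 <= k <= n ->
  Qterm n x y i k.+1 + ent n y i.+1 = ent n x i.+1 + Qterm n x y i.+1 k.
Proof.
move=> /andP[h1 h2]; rewrite /Qterm.
rewrite big_nat_recl // (big_nat_recr _ _ _ (_ : k.+1 <= n.+1)) //=.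
rewrite [in X in _ = _ + (_ + X)]big_add1 /=.
have -> : ent n y (i.+1 + n.+1) = ent n y i.+1 by rewrite ent_per.
rewrite addn1.
under eq_bigr do rewrite addnS -addSn.
under [in X in _ = _ + (_ + X)]eq_bigr do rewrite addnS -addSn.
rewrite [X in _ + _ + X + _ = _]big_add1 /= [X in _ + _ + X + _ = _]big_add1 /=.
have -> : \sum_(k <= j < n) ent n y (i + j.+2) = \sum_(k <= j < n) ent n y (i.+2 + j).
  by apply: eq_bigr => j _; congr (ent n y _); lia.
lia.
Qed.

Lemma sumn_big (x : seq nat) : sumn x = \sum_(0 <= j < size x) nth 0 x j.
Proof. by rewrite sumnE (big_nth 0). Qed.

Lemma cyc_sum n x i : size x = n.+1 -> \sum_(1 <= j < n.+2) ent n x (i + j) = sumn x.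
Proof.
move=> hs; elim: i => [|i IH].
  rewrite big_add1 /= sumn_big hs; apply: eq_big_nat => j /andP[_ hj].
  by rewrite add0n ent_nth.
rewrite big_nat_recr //= ent_per.
rewrite big_nat_recl // in IH; rewrite -IH addnC; congr (_ + _).
  by rewrite addn1.
by apply: eq_bigr => j _; rewrite addSn addnS.
Qed.

Lemma Qterm_1 n x y i : size y = n.+1 -> Qterm n x y i 1 + ent n y i.+1 = sumn y.
Proof.
move=> hs; rewrite -(cyc_sum i hs) big_nat_recl // /Qterm big_geq // add0n.
rewrite big_add1 /= addn1 addnC; congr (_ + _).
Qed.

Lemma Qterm_ge n x y i j k : 1 <= j < k -> ent n x (i + j) <= Qterm n x y i k.
Proof.
move=> /andP[h1 h2]; rewrite /Qterm; apply: leq_trans (leq_addr _ _).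
rewrite (@big_cat_nat _ _ _ j 1 k) //; last exact: ltnW. rewrite (@big_ltn _ _ _ j k) //.
rewrite /=. lia.
Qed.

Lemma Q_per n x y : Q n x y n.+1 = Q n x y 0.
Proof.
have E : forall k, Qterm n x y n.+1 k = Qterm n x y 0 k.
  move=> k; rewrite /Qterm; congr (_ + _); apply: eq_bigr => j _;
  by rewrite add0n addnC ent_per.
by rewrite /Q E; under eq_bigr do rewrite E.
Qed.

Lemma Q_lem n x y i : size y = n.+1 -> Q n x y i <= sumn y.
Proof.
move=> hs; apply: leq_trans (Q_le _ _ _ (k:=1) _) _ => //.
by rewrite -(Qterm_1 x i hs) leq_addr.
Qed.

Lemma Q0_reg n x y : size y = n.+1 -> sumn y <= nth 0 x 0 ->
  Q n x y 0 + ent n y 1 = sumn y.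
Proof.
move=> hs hx; have h1 := @Qterm_1 n x y 0 hs.
have hle := @Q_le n x y 0 1 erefl.
have [k [hk e]] := Q_ex n x y 0.
case: k hk e => [//|[|k]] hk e; first by rewrite e.
have := @Qterm_ge n x y 0 1 k.+2 erefl; rewrite add0n ent_1 -e.
lia.
Qed.

Lemma Qrec_reg n x y i : size y = n.+1 -> sumn y <= nth 0 x 0 -> 1 <= i <= n ->
  Q n x y i + ent n y i.+1 = minn (sumn y) (ent n x i.+1 + Q n x y i.+1).
Proof.
move=> hs hx /andP[hi1 hi2].
have h1 := @Qterm_1 n x y i hs.
have hle := @Q_le n x y i 1 erefl.
have U2 : Q n x y i + ent n y i.+1 <= ent n x i.+1 + Q n x y i.+1 \/
          sumn y <= ent n x i.+1 + Q n x y i.+1.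
  have [k [hk e]] := Q_ex n x y i.+1.
  case/andP: hk => hk1 hk2; rewrite leq_eqVlt in hk2.
  case/orP: hk2 => [/eqP ek|hk2].
    right; subst k; apply: leq_trans hx _; rewrite e.
    have := @Qterm_ge n x y i.+1 (n.+1 - i) n.+1.
    have -> : i.+1 + (n.+1 - i) = 1 + n.+1 by lia.
    rewrite ent_per ent_1 => H; apply: leq_trans (H _) (leq_addl _ _); lia.
  left; have := @Qterm_shift n x y i k; rewrite -e => <-; last by lia.
  by rewrite leq_add2r; apply: Q_le; lia.
have L : Q n x y i + ent n y i.+1 = sumn y \/
         ent n x i.+1 + Q n x y i.+1 <= Q n x y i + ent n y i.+1.
  have [k [hk e]] := Q_ex n x y i.
  case: k hk e => [//|[|k]] hk e; first by left; rewrite e.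
  right; rewrite e Qterm_shift; last by lia.
  by rewrite leq_add2l; apply: Q_le; lia.
lia.
Qed.

Section Reg.
Variables (n : nat) (x y : elt).
Hypothesis hs : size y = n.+1.
Hypothesis hx : sumn y <= nth 0 x 0.

Lemma Qexact i : 1 <= i <= n.+1 ->
  Q n x y i <= ent n y i + Q n x y i.-1 /\ Q n x y i.-1 <= ent n x i + Q n x y i.
Proof.
case: i => [//|[|i]] hi.
  have := Q0_reg hs hx; have := @Q_lem n x y 1 hs; have := @Q_lem n x y 0 hs; rewrite !ent_1; simpl; lia.
have := @Qrec_reg n x y i.+1 hs hx; have := @Q_lem n x y i.+2 hs.
move=> h1 h2; have := h2 (ltac:(lia)); simpl; lia.
Qed.

Lemma ent_map (f : nat -> nat) i : 1 <= i <= n.+1 ->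
  ent n [seq f j | j <- iota 1 n.+1] i = f i.
Proof.
move=> hi; rewrite ent_nth // (nth_map 0); last by rewrite size_iota; lia.
rewrite nth_iota; last by lia.
by congr f; lia.
Qed.

Lemma Ra i : 1 <= i <= n.+1 ->
  ent n (Rmap n x y).1 i + Q n x y i = ent n y i + Q n x y i.-1.
Proof.
move=> hi; rewrite /Rmap /= ent_map //; have := Qexact hi; lia.
Qed.

Lemma Rv i : 1 <= i <= n.+1 ->
  ent n (Rmap n x y).2 i + Q n x y i.-1 = ent n x i + Q n x y i.
Proof.
move=> hi; rewrite /Rmap /= ent_map //; have := Qexact hi; lia.
Qed.

Lemma Rcons i : 1 <= i <= n.+1 ->
  ent n (Rmap n x y).1 i + ent n (Rmap n x y).2 i = ent n x i + ent n y i.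
Proof. move=> hi; have := Ra hi; have := Rv hi; lia. Qed.

Lemma Rsize1 : size (Rmap n x y).1 = n.+1.
Proof. by rewrite /Rmap /= size_map size_iota. Qed.

Lemma Rsize2 : size (Rmap n x y).2 = n.+1.
Proof. by rewrite /Rmap /= size_map size_iota. Qed.

Lemma Rtele j : j <= n.+1 ->
  \sum_(1 <= i < j.+1) ent n (Rmap n x y).1 i + Q n x y j =
  \sum_(1 <= i < j.+1) ent n y i + Q n x y 0.
Proof.
elim: j => [|j IH] hj; first by rewrite !big_geq.
rewrite (@big_nat_recr _ _ _ j.+1 1) // (@big_nat_recr _ _ _ j.+1 1) //.
have := Ra (i := j.+1) (ltac:(lia)); have := IH (ltac:(lia)); rewrite succnK /=; lia.
Qed.

Lemma Rsumn : sumn (Rmap n x y).1 = sumn y.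
Proof.
have := Rtele (leqnn n.+1); rewrite Q_per.
have := @cyc_sum n (Rmap n x y).1 0 Rsize1; have := @cyc_sum n y 0 hs.
rewrite /= !(eq_bigr _ (fun i _ => congr1 (ent n _) (add0n i))) => -> ->. lia.
Qed.

Lemma Rhead : nth 0 x 0 <= nth 0 (Rmap n x y).2 0 + sumn y.
Proof.
rewrite -!(@ent_1 n); have := Rv (i:=1) erefl; have := @Q_lem n x y 0 hs. simpl; lia.
Qed.

Lemma balls_split (z : elt) d : 1 <= d ->
  \sum_(1 <= i < d.+1) ent n z i = ent n z 1 + balls n d z.
Proof. by move=> hd; rewrite big_ltn. Qed.

Lemma Rlocal d : 2 <= d <= n.+1 ->
  ent n (Rmap n x y).1 d <= ent n x d /\
  balls n d y <= ent n (Rmap n x y).1 1 + balls n d.-1 (Rmap n x y).1 /\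
  (ent n (Rmap n x y).1 d = ent n x d \/
   balls n d y = ent n (Rmap n x y).1 1 + balls n d.-1 (Rmap n x y).1).
Proof.
case: d => [//|j] hd.
have E1 := @Qrec_reg n x y j hs hx (ltac:(lia)).
have E2 := Ra (i:=j.+1) (ltac:(lia)).
have E3 := Rtele (j:=j) (ltac:(lia)).
have E4 := Q0_reg hs hx.
have E5 := @balls_split y j.+1 erefl.
have E6 := @balls_split (Rmap n x y).1 j (ltac:(lia)).
rewrite big_nat_recr //= in E5.
simpl in *; lia.
Qed.

End Reg.

Lemma leq_sum1 (F : nat -> nat) a b j : a <= j < b -> F j <= \sum_(a <= i < b) F i.
Proof.
move=> /andP[h1 h2]; rewrite (@big_cat_nat _ _ _ j a b) //; last exact: ltnW.
rewrite (@big_ltn _ _ _ j b) //= addnCA; exact: leq_addr.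
Qed.

Lemma ent_eq_tail n (x w : elt) i : behead x = behead w -> 2 <= i <= n.+1 ->
  ent n x i = ent n w i.
Proof.
move=> e hi; rewrite !ent_nth; try lia.
case: i hi => [|[|i]] // hi; by rewrite /= -!nth_behead e.
Qed.

Section Tail.
Variables (n : nat) (x w y : elt).
Hypothesis hs : size y = n.+1.
Hypothesis hx : sumn y <= nth 0 x 0.
Hypothesis hw : sumn y <= nth 0 w 0.
Hypothesis e : behead x = behead w.

Lemma Q_tail i : i <= n.+1 -> Q n x y i = Q n w y i.
Proof.
have h0 : Q n x y 0 = Q n w y 0 by have := Q0_reg hs hx; have := Q0_reg hs hw; lia.
case: i => [//|i] hi.
suff: forall r, r <= n -> Q n x y (n.+1 - r) = Q n w y (n.+1 - r).
  by move=> /(_ (n - i) (leq_subr _ _)); rewrite subSn ?subKn //; lia.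
elim=> [|r IH] hr; first by rewrite subn0 !Q_per.
have E1 := @Qrec_reg n x y (n - r) hs hx (ltac:(lia)).
have E2 := @Qrec_reg n w y (n - r) hs hw (ltac:(lia)).
have E3 : (n - r).+1 = n.+1 - r by lia.
rewrite E3 -IH ?(ltnW hr) // -(@ent_eq_tail n x w) // in E2; last by lia.
have -> : n.+1 - r.+1 = n - r by lia.
rewrite E3 in E1; lia.
Qed.

Lemma R_tail : (Rmap n x y).1 = (Rmap n w y).1 /\
  behead (Rmap n x y).2 = behead (Rmap n w y).2.
Proof.
rewrite /Rmap /=; split.
  rewrite !Q_tail //; congr (_ :: _).
  apply/eq_in_map => i; rewrite mem_iota => hi.
  rewrite !Q_tail //; lia.
apply/eq_in_map => i; rewrite mem_iota => hi.
rewrite !Q_tail ?(@ent_eq_tail n x w) //; lia.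
Qed.

End Tail.

Definition total (p : state) := sumn (map sumn p).
Definition allsz n (p : state) := all (fun x => size x == n.+1) p.

Lemma sweep_cons n v y p : sweep n v (y :: p) = (Rmap n v y).1 :: sweep n (Rmap n v y).2 p.
Proof. by []. Qed.

Lemma sweep_tail n p : allsz n p -> forall x w, behead x = behead w ->
  total p <= nth 0 x 0 -> total p <= nth 0 w 0 -> sweep n x p = sweep n w p.
Proof.
elim: p => [//|y p IH] ha0 x w e hx hw; case/andP: ha0 => /eqP hs ha.
rewrite !sweep_cons.
have hx' : sumn y <= nth 0 x 0 by apply: leq_trans hx; rewrite /total /= leq_addr.
have hw' : sumn y <= nth 0 w 0 by apply: leq_trans hw; rewrite /total /= leq_addr.
have [e1 e2] := R_tail hs hx' hw' e.
rewrite e1; congr (_ :: _); apply: IH => //.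
  have := Rhead hs hx'; move: hx; rewrite /total /=; lia.
have := Rhead hs hw'; move: hw; rewrite /total /=; lia.
Qed.

Lemma Tl_stab n p l : allsz n p -> total p <= l -> Tl n l p = Tl n (total p) p.
Proof. by move=> ha hl; apply: sweep_tail. Qed.

Lemma Tinf_eq n p : allsz n p -> Tinf n p = Tl n (total p) p.
Proof.
move=> ha; rewrite /Tinf.
set P := fun q => exists N, forall l, N <= l -> Tl n l p = q.
have hP : P (Tl n (total p) p) by exists (total p) => l hl; apply: Tl_stab.
have [N hN] := epsilon_spec (inhabits p) P (ex_intro _ _ hP).
by rewrite -(hN (maxn N (total p))) ?leq_maxl // Tl_stab // leq_maxr.
Qed.

Fixpoint carr n (v : elt) (p : state) (j : nat) : elt :=
  match j, p with
  | j'.+1, y :: p' => carr n (Rmap n v y).2 p' j'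
  | _, _ => v
  end.

Lemma size_sweep n v p : size (sweep n v p) = size p.
Proof. by elim: p v => [//|y p IH] v; rewrite sweep_cons /= IH. Qed.

Lemma sweep_nth n v p j : j < size p ->
  nth [::] (sweep n v p) j = (Rmap n (carr n v p j) (nth [::] p j)).1.
Proof.
elim: p v j => [//|y p IH] v [|j] hj; rewrite sweep_cons //=.
by apply: IH.
Qed.

Lemma allsz_cons n x p : allsz n (x :: p) = (size x == n.+1) && allsz n p.
Proof. by []. Qed.

Lemma map_cons' (f : elt -> nat) x p : map f (x :: p) = f x :: map f p.
Proof. by []. Qed.

Lemma nth_cons0 (x : elt) p : nth [::] (x :: p) 0 = x.
Proof. by []. Qed.

Lemma nth_consS (x : elt) p i : nth [::] (x :: p) i.+1 = nth [::] p i.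
Proof. by []. Qed.

Lemma carr_consS n v y p j : carr n v (y :: p) j.+1 = carr n (Rmap n v y).2 p j.
Proof. by []. Qed.

Lemma carr_cons0 n v p : carr n v p 0 = v.
Proof. by case: p. Qed.

Lemma allsz_sweep n v p : allsz n (sweep n v p).
Proof.
elim: p v => [//|y p IH] v; rewrite sweep_cons allsz_cons IH andbT.
by rewrite Rsize1.
Qed.

Lemma carr_reg n v p j : allsz n p -> total p <= nth 0 v 0 -> j <= size p ->
  total (drop j p) <= nth 0 (carr n v p j) 0.
Proof.
elim: p v j => [|y p IH] v [|j] ha hv hj; try by [rewrite drop0 | move: hj].
case/andP: ha => /eqP hs ha; rewrite carr_consS drop_cons; apply: IH => //.
have hy : sumn y <= nth 0 v 0 by apply: leq_trans hv; rewrite /total /= leq_addr.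
have := Rhead hs hy; move: hv; rewrite /total /=; lia.
Qed.

Lemma nth_allsz n p j : allsz n p -> j < size p -> size (nth [::] p j) = n.+1.
Proof. by move=> /allP ha hj; apply/eqP/ha; rewrite mem_nth. Qed.

Lemma reg_at n v p j : allsz n p -> total p <= nth 0 v 0 -> j < size p ->
  sumn (nth [::] p j) <= nth 0 (carr n v p j) 0.
Proof.
move=> ha hv hj; apply: leq_trans (carr_reg ha hv (ltnW hj)).
by rewrite /total (drop_nth [::] hj) /= leq_addr.
Qed.

Lemma carr_cons n v p j d : allsz n p -> total p <= nth 0 v 0 -> j <= size p ->
  1 <= d <= n.+1 ->
  ent n (carr n v p j) d + \sum_(0 <= i < j) ent n (nth [::] (sweep n v p) i) d =
  ent n v d + \sum_(0 <= i < j) ent n (nth [::] p i) d.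
Proof.
elim: p v j => [|y p IH] v [|j] // ha hv hj hd; try by rewrite !big_geq.
case/andP: ha => /eqP hs ha.
have hy : sumn y <= nth 0 v 0 by apply: leq_trans hv; rewrite /total /= leq_addr.
rewrite !big_nat_recl // sweep_cons !nth_cons0.
under eq_bigr do rewrite nth_consS.
under [X in _ = _ + (_ + X)]eq_bigr do rewrite nth_consS.
have := Rcons hs hy hd.
have := IH (Rmap n v y).2 j ha (ltac:(have := Rhead hs hy; move: hv; rewrite /total /=; lia)) hj hd.
rewrite carr_consS; lia.
Qed.

Lemma sumn_sweep n v p : allsz n p -> total p <= nth 0 v 0 ->
  map sumn (sweep n v p) = map sumn p.
Proof.
elim: p v => [//|y p IH] v ha hv; case/andP: ha => /eqP hs ha.
have hy : sumn y <= nth 0 v 0 by apply: leq_trans hv; rewrite /total /= leq_addr.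
rewrite sweep_cons !map_cons' Rsumn // IH //.
have := Rhead hs hy; move: hv; rewrite /total /=; lia.
Qed.

Lemma uvac_tail n l d : 2 <= d <= n.+1 -> ent n (uvac n l) d = 0.
Proof.
move=> hd; rewrite ent_nth; last by lia.
case: d hd => [|[|d]] // hd; by rewrite /= nth_nseq; case: ifP.
Qed.

Lemma balls0_ent n x d : balls n n.+1 x = 0 -> 2 <= d <= n.+1 -> ent n x d = 0.
Proof.
move=> h hd; have := @leq_sum1 (ent n x) 2 n.+2 d (ltac:(lia)).
rewrite /balls in h; rewrite h; lia.
Qed.

Lemma ent0_balls n x : (forall d, 2 <= d <= n.+1 -> ent n x d = 0) ->
  balls n n.+1 x = 0.
Proof.
move=> h; rewrite /balls big_nat_cond big1 // => i /andP[hi _]; apply: h; lia.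
Qed.

Lemma vac_sweep n v p r : allsz n p -> total p <= nth 0 v 0 ->
  (forall d, 2 <= d <= n.+1 -> ent n v d = 0) ->
  (forall i, i < r -> i < size p -> balls n n.+1 (nth [::] p i) = 0) ->
  forall i, i <= r -> i < size p -> balls n n.+1 (nth [::] (sweep n v p) i) = 0.
Proof.
move=> ha hv hv0 hp i hir hi; apply: ent0_balls => d hd.
have hc := @carr_cons n v p i d ha hv (ltnW hi) (ltac:(lia)).
have e0 : \sum_(0 <= i0 < i) ent n (nth [::] p i0) d = 0.
  rewrite big_nat_cond big1 // => i' /andP[/andP[_ hi'] _]; apply: balls0_ent => //.
  apply: hp; lia.
rewrite e0 hv0 // in hc.
have [h1 _] := Rlocal (nth_allsz ha hi) (reg_at ha hv hi) hd.
rewrite sweep_nth //; lia.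
Qed.

Lemma Tinf_sweep n p : allsz n p -> Tinf n p = sweep n (uvac n (total p)) p.
Proof. by move=> ha; rewrite Tinf_eq. Qed.

Lemma iter_props n p t : allsz n p ->
  [/\ allsz n (iter t (Tinf n) p), size (iter t (Tinf n) p) = size p &
      forall i, i < t -> i < size p -> balls n n.+1 (nth [::] (iter t (Tinf n) p) i) = 0].
Proof.
move=> ha; elim: t => [|t [IH1 IH2 IH3]]; first by split.
have -> : iter t.+1 (Tinf n) p = Tinf n (iter t (Tinf n) p) by [].
rewrite Tinf_sweep //; split.
- exact: allsz_sweep.
- by rewrite size_sweep.
move=> i hi hip; rewrite -IH2 in hip; apply: (@vac_sweep n _ _ t) => //; try lia.
- exact: uvac_tail.
- by move=> i' h1 h2; apply: IH3 => //; rewrite -IH2.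
Qed.

Lemma iter_vac n p t j : allsz n p -> size p <= t ->
  balls n n.+1 (nth [::] (iter t (Tinf n) p) j) = 0.
Proof.
move=> ha ht; have [_ h2 h3] := iter_props t ha.
case: (ltnP j (size p)) => hj; first by apply: h3 => //; lia.
rewrite nth_default ?h2 //; apply: ent0_balls => d _; by rewrite /ent nth_nil.
Qed.

Lemma fsum_eq (f : nat -> nat) N : (forall t, N <= t -> f t = 0) ->
  fsum f = \sum_(1 <= t < N.+1) f t.
Proof.
move=> hf.
have key : forall M, N.+1 <= M -> \sum_(1 <= t < M) f t = \sum_(1 <= t < N.+1) f t.
  move=> M hM; rewrite (@big_cat_nat _ _ _ N.+1 1 M) //=.
  have -> : \sum_(N.+1 <= t < M) f t = 0.
    by rewrite big_nat_cond big1 // => t /andP[/andP[h _] _]; apply: hf; lia.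
  by rewrite addn0.
set P := fun s => exists N', forall M, N' <= M -> \sum_(1 <= t < M) f t = s.
have hP : P (\sum_(1 <= t < N.+1) f t) by exists N.+1.
have [N' hN'] := epsilon_spec (inhabits 0) P (ex_intro _ _ hP).
rewrite /fsum -/P -(hN' (maxn N' N.+1)) ?leq_maxl // key // leq_maxr //.
Qed.

Lemma fsum_shift (f : nat -> nat) N : (forall t, N <= t -> f t = 0) ->
  fsum f = f 1 + fsum (fun t => f t.+1).
Proof.
move=> hf.
rewrite (@fsum_eq f N.+1); last by move=> t ht; apply: hf; lia.
rewrite (@fsum_eq _ N); last by move=> t ht; apply: hf; lia.
by rewrite big_ltn // big_add1.
Qed.

Lemma sum_shift1 (F : nat -> nat) k : \sum_(1 <= j < k.+1) F j.-1 = \sum_(0 <= i < k) F i.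
Proof. by rewrite big_add1. Qed.

Lemma balls_S n d x : 1 <= d -> balls n d.+1 x = balls n d x + ent n x d.+1.
Proof. by move=> hd; rewrite /balls big_nat_recr. Qed.

Lemma sum_balls_S n d (q : state) k : 1 <= d ->
  \sum_(1 <= j < k) balls n d.+1 (nth [::] q j.-1) =
  \sum_(1 <= j < k) balls n d (nth [::] q j.-1) + \sum_(1 <= j < k) ent n (nth [::] q j.-1) d.+1.
Proof. by move=> hd; rewrite -big_split /=; apply: eq_bigr => j _; rewrite balls_S. Qed.

Lemma rho_pos_T n p k d : allsz n p ->
  rho_pos n (Tinf n p) k d + \sum_(1 <= j < k.+1) balls n n.+1 (nth [::] (Tinf n p) j.-1) =
  \sum_(1 <= j < k.+1) balls n d (nth [::] (Tinf n p) j.-1) +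
  fsum (fun t => \sum_(1 <= j < k.+1) balls n n.+1 (nth [::] (iter t (Tinf n) p) j.-1)).
Proof.
move=> ha; rewrite /rho_pos.
set g := fun t => \sum_(1 <= j < k.+1) balls n n.+1 (nth [::] (iter t (Tinf n) p) j.-1).
have hz : forall t, size p <= t -> g t = 0.
  by move=> t ht; rewrite /g big_nat_cond big1 // => j _; apply: iter_vac.
rewrite (fsum_shift hz).
rewrite (@fsum_eq (fun t => g t.+1) (size p)); last by move=> t ht; apply: hz; lia.
rewrite (@fsum_eq _ (size p)); last first.
  move=> t ht; rewrite big_nat_cond big1 // => j _.
  have -> : iter t (Tinf n) (Tinf n p) = iter t.+1 (Tinf n) p by rewrite iterSr.
  by apply: iter_vac; lia.
have -> : \sum_(1 <= t < (size p).+1)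
   \sum_(1 <= j < k.+1) balls n n.+1 (nth [::] (iter t (Tinf n) (Tinf n p)) j.-1) =
   \sum_(1 <= t < (size p).+1) g t.+1.
  by apply: eq_bigr => t _; rewrite /g iterSr.
rewrite /g /=; lia.
Qed.

Lemma sumn_balls n x : size x = n.+1 -> sumn x = ent n x 1 + balls n n.+1 x.
Proof.
move=> hs; rewrite -(@cyc_sum n x 0 hs) big_ltn //; congr (_ + _).
Qed.

Lemma rhoS n q k d : rho n q k d.+1 = Posz (rho_pos n q k d.+1).
Proof. by []. Qed.

Local Open Scope ring_scope.

Theorem proposition4p2 (n : nat) (p : state) :
  (1 <= n)%N -> is_state n p ->
  forall k d : nat, (1 <= k <= size p)%N -> (2 <= d <= n.+1)%N ->
  rho n (Tinf n p) k d.-1 + rho n p k.-1 d =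
  Num.max (rho n (Tinf n p) k d + rho n p k.-1 d.-1)
          (rho n (Tinf n p) k.-1 d.-1 + rho n p k d - (lam p k)%:Z).
Proof.
move=> hn hst k d /andP[hk1 hkL] /andP[hd1 hdn].
have ha : allsz n p.
  by apply/allP => x hx; have /andP[] := allP hst x hx.
case: k hk1 hkL => [//|k] _ hkL.
case: d hd1 hdn => [|[|d]] // _ hdn.
rewrite !rhoS /=.
have T1 := @rho_pos_T n p k.+1 d.+1 ha.
have T2 := @rho_pos_T n p k.+1 d.+2 ha.
have T3 := @rho_pos_T n p k d.+1 ha.
have P1 : rho_pos n p k d.+2 = (\sum_(1 <= j < k.+1) balls n d.+2 (nth [::] p j.-1) +
  fsum (fun t => \sum_(1 <= j < k.+1) balls n n.+1 (nth [::] (iter t (Tinf n) p) j.-1)))%N by [].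
have P2 : rho_pos n p k d.+1 = (\sum_(1 <= j < k.+1) balls n d.+1 (nth [::] p j.-1) +
  fsum (fun t => \sum_(1 <= j < k.+1) balls n n.+1 (nth [::] (iter t (Tinf n) p) j.-1)))%N by [].
have P3 : rho_pos n p k.+1 d.+2 = (\sum_(1 <= j < k.+2) balls n d.+2 (nth [::] p j.-1) +
  fsum (fun t => \sum_(1 <= j < k.+2) balls n n.+1 (nth [::] (iter t (Tinf n) p) j.-1)))%N by [].
rewrite (@big_nat_recr _ _ _ k.+1 1) //= in T1.
rewrite (@big_nat_recr _ _ _ k.+1 1) //= in T1.
rewrite (@big_nat_recr _ _ _ k.+1 1) //= in T2.
rewrite (@big_nat_recr _ _ _ k.+1 1) //= in T2.
rewrite (@big_nat_recr _ _ _ k.+1 1) //= in P3.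
rewrite (@sum_balls_S n d.+1 (Tinf n p) k.+1) // (@balls_S n d.+1 (nth [::] (Tinf n p) k)) // in T2.
rewrite (@sum_balls_S n d.+1 p k.+1) // in P1.
rewrite (@sum_balls_S n d.+1 p k.+1) // (@balls_S n d.+1 (nth [::] p k)) // in P3.
set v := carr n (uvac n (total p)) p k.
have hdn' : (2 <= d.+2 <= n.+1)%N by lia.
have C : (ent n v d.+2 + \sum_(1 <= j < k.+1) ent n (nth [::] (Tinf n p) j.-1) d.+2 =
          \sum_(1 <= j < k.+1) ent n (nth [::] p j.-1) d.+2)%N.
  rewrite !big_add1 /= Tinf_sweep //.
  have := @carr_cons n (uvac n (total p)) p k d.+2 ha (leqnn _) (ltnW hkL) (ltac:(lia)).
  rewrite uvac_tail //; lia.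
have Ea : nth [::] (Tinf n p) k = (Rmap n v (nth [::] p k)).1.
  by rewrite Tinf_sweep // sweep_nth.
have RL := Rlocal (nth_allsz ha hkL) (@reg_at n (uvac n (total p)) p k ha (leqnn _) hkL) hdn'.
rewrite -Ea /= (@balls_S n d.+1 (nth [::] p k)) // in RL.
have Sab : sumn (nth [::] (Tinf n p) k) = sumn (nth [::] p k).
  have := congr1 (fun s => nth 0%N s k) (@sumn_sweep n (uvac n (total p)) p ha (leqnn _)).
  by rewrite /= !(nth_map [::]) ?size_sweep // Tinf_sweep.
have ha1 : allsz n (Tinf n p) by rewrite Tinf_sweep // allsz_sweep.
have hsz1 : size (nth [::] (Tinf n p) k) = n.+1.
  by apply: nth_allsz ha1 _; rewrite Tinf_sweep // size_sweep.
have Sa := sumn_balls hsz1.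
have -> : lam p k.+1 = sumn (nth [::] p k) by [].
move: RL => [RL1 [RL2 RL3]].
rewrite /v in C; lia.
Qed.
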